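(* Let $M\subset\mathbb{R}^{2d}$ satisfy the standing assumptions below and let $T$ be its outer symplectic billiard map. For every integer $k\ge1$ there exists a constant $\rho=\rho(k,M)>0$ such that there are no $k$-periodic orbits of $T$ outside the ball of radius $\rho$ centered at the origin; that is, every point $z$ in the exterior of $M$ with $T^k(z)=z$ satisfies $|z|\le\rho$.
   Context: Equip $\mathbb{R}^{2d}$ with the standard inner product, Euclidean norm $|\cdot|$, complex structure $J$ and symplectic form $\omega(u,v)=\langle Ju,v\rangle$. Standing assumptions: $M\subset\mathbb{R}^{2d}$ is a smooth closed hypersurface bounding a strictly convex domain containing the origin in its interior, and $M$ is a level set of a smooth function with positive definite Hessian. For $q\in M$ the Reeb vector $R(q)$ is the unique vector with $\omega(v,R(q))=0$ for all $v\in T_qM$ and $\omega(q,R(q))=1$. For $x$ in the exterior of $M$ there is a unique $m_-(x)\in M$ with $m_-(x)-x=\lambda R(m_-(x))$ for some $\lambda>0$; the outer symplectic billiard map is $T(x)=2m_-(x)-x$. *)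

(* Defs.v *)
From HB Require Import structures.
From mathcomp Require Import all_boot all_order all_algebra.
From mathcomp Require Import all_classical all_reals all_analysis.
Set Implicit Arguments. Unset Strict Implicit. Unset Printing Implicit Defensive.
Import Order.TTheory GRing.Theory Num.Theory.
Import numFieldNormedType.Exports.
Local Open Scope classical_set_scope.
Local Open Scope ring_scope.

(* R^{2d} is represented as row vectors of length d + d; the first d
   coordinates are x, the last d are y (z = x + i y). *)
Notation vec R d := 'rV[R]_(d + d).

Section Sympl.
Variables (R : realType) (d : nat).

Definition inner (u v : vec R d) : R := (u *m v^T) 0 0.

Definition enorm (u : vec R d) : R := Num.sqrt (inner u u).

Definition Jc (u : vec R d) : vec R d := row_mx (- rsubmx u) (lsubmx u).

Definition omega (u v : vec R d) : R := inner (Jc u) v.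

Fixpoint smooth_n (n : nat) (f : vec R d -> R) : Prop :=
  match n with
  | 0 => continuous f
  | n'.+1 => (forall x, differentiable f x) /\
             (forall v : vec R d, smooth_n n' (fun x => 'D_v f x))
  end.
Definition smooth (f : vec R d -> R) : Prop := forall n, smooth_n n f.

Definition ebase (i : 'I_(d + d)) : vec R d := delta_mx 0 i.

Definition hessian (f : vec R d -> R) (x : vec R d) : 'M[R]_(d + d) :=
  \matrix_(i, j) 'D_(ebase i) (fun y => 'D_(ebase j) f y) x.

Definition posdef (A : 'M[R]_(d + d)) : Prop :=
  forall v : vec R d, v != 0 -> 0 < (v *m A *m v^T) 0 0.

(* M = F^{-1}(c); the bounded domain is {F < c}, the exterior is {F > c} *)
Definition levelset (F : vec R d -> R) (c : R) : set (vec R d) :=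
  [set x | F x = c].
Definition exterior (F : vec R d -> R) (c : R) : set (vec R d) :=
  [set x | c < F x].

(* tangent space T_qM of the regular level set M at q: kernel of dF_q *)
Definition tangent (F : vec R d -> R) (q : vec R d) : set (vec R d) :=
  [set v | 'D_v F q = 0].

Definition is_reeb (F : vec R d -> R) (q r : vec R d) : Prop :=
  (forall v, tangent F q v -> omega v r = 0) /\ omega q r = 1.

(* graph of the outer symplectic billiard map: for x in the exterior,
   m = m_-(x) in M with m - x = lambda R(m), lambda > 0, and T(x) = 2m - x *)
Definition billiard_step (F : vec R d -> R) (c : R) (x y : vec R d) : Prop :=
  exterior F c x /\
  exists (m r : vec R d) (lam : R),
    levelset F c m /\ is_reeb F m r /\ 0 < lam /\
    m - x = lam *: r /\ y = 2%:R *: m - x.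

Definition billiard_iter (F : vec R d -> R) (c : R) (k : nat)
  (x y : vec R d) : Prop :=
  exists z : nat -> vec R d,
    z 0%N = x /\ z k = y /\
    forall i, (i < k)%N -> billiard_step F c (z i) (z i.+1).

End Sympl.

(* Main.v *)
Require Import Defs.
From HB Require Import structures.
From mathcomp Require Import all_boot all_order all_algebra.
From mathcomp Require Import all_classical all_reals all_analysis.
From mathcomp Require Import ring lra.
Import Order.TTheory GRing.Theory Num.Theory.
Import numFieldNormedType.Exports.
Local Open Scope classical_set_scope.
Local Open Scope ring_scope.

Set Implicit Arguments. Unset Strict Implicit.
Section Alg.
Variables (R : realType) (d : nat).
Implicit Types (u v w : vec R d).

Lemma innerE u v : inner u v = \sum_j u 0 j * v 0 j.
Proof. by rewrite /inner !mxE; apply: eq_bigr => j _; rewrite mxE. Qed.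

Lemma innerC u v : inner u v = inner v u.
Proof. by rewrite !innerE; apply: eq_bigr => j _; rewrite mulrC. Qed.

Lemma innerDl u v w : inner (u + v) w = inner u w + inner v w.
Proof. by rewrite !innerE -big_split; apply: eq_bigr => j _; rewrite mxE mulrDl. Qed.

Lemma innerZl (t : R) u v : inner (t *: u) v = t * inner u v.
Proof. by rewrite !innerE mulr_sumr; apply: eq_bigr => j _; rewrite mxE mulrA. Qed.

Lemma innerNl u v : inner (- u) v = - inner u v.
Proof. by rewrite -scaleN1r innerZl mulN1r. Qed.

Lemma innerBl u v w : inner (u - v) w = inner u w - inner v w.
Proof. by rewrite innerDl innerNl. Qed.

Lemma innerDr u v w : inner w (u + v) = inner w u + inner w v.
Proof. by rewrite innerC innerDl !(innerC w). Qed.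
Lemma innerZr (t : R) u v : inner v (t *: u) = t * inner v u.
Proof. by rewrite innerC innerZl innerC. Qed.
Lemma innerNr u v : inner v (- u) = - inner v u.
Proof. by rewrite innerC innerNl innerC. Qed.
Lemma innerBr u v w : inner w (u - v) = inner w u - inner w v.
Proof. by rewrite innerDr innerNr. Qed.

Lemma inner_ge0 u : 0 <= inner u u.
Proof. by rewrite innerE; apply: sumr_ge0 => j _; rewrite -expr2 sqr_ge0. Qed.

Lemma JcD u v : Jc (u + v) = Jc u + Jc v.
Proof. by rewrite /Jc add_row_mx !linearD /= ?opprD. Qed.
Lemma JcZ (t : R) u : Jc (t *: u) = t *: Jc u.
Proof. by rewrite /Jc scale_row_mx !linearZ /= scalerN. Qed.
Lemma JcN u : Jc (- u) = - Jc u.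
Proof. by rewrite -scaleN1r JcZ scaleN1r. Qed.
Lemma JcB u v : Jc (u - v) = Jc u - Jc v.
Proof. by rewrite JcD JcN. Qed.

Lemma JcJc u : Jc (Jc u) = - u.
Proof.
rewrite /Jc row_mxKl row_mxKr -{3}(hsubmxK u) opp_row_mx. done.
Qed.

Lemma inner_J u v : inner (Jc u) (Jc v) = inner u v.
Proof.
rewrite /inner /Jc -{3}(hsubmxK u) -{3}(hsubmxK v) !tr_row_mx !mul_row_col.
by rewrite !linearN /= mulNmx opprK addrC.
Qed.

Lemma omega_anti u v : omega u v = - omega v u.
Proof.
rewrite /omega -{1}(inner_J (Jc u) v) JcJc innerNl innerC. done.
Qed.

Lemma omega_self u : omega u u = 0.
Proof. have := omega_anti u u; lra. Qed.

Lemma omegaDl u v w : omega (u + v) w = omega u w + omega v w.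
Proof. by rewrite /omega JcD innerDl. Qed.
Lemma omegaZl (t : R) u v : omega (t *: u) v = t * omega u v.
Proof. by rewrite /omega JcZ innerZl. Qed.
Lemma omegaNl u v : omega (- u) v = - omega u v.
Proof. by rewrite /omega JcN innerNl. Qed.
Lemma omegaBl u v w : omega (u - v) w = omega u w - omega v w.
Proof. by rewrite omegaDl omegaNl. Qed.
Lemma omegaDr u v w : omega w (u + v) = omega w u + omega w v.
Proof. by rewrite /omega innerDr. Qed.
Lemma omegaZr (t : R) u v : omega v (t *: u) = t * omega v u.
Proof. by rewrite /omega innerZr. Qed.
Lemma omegaNr u v : omega v (- u) = - omega v u.
Proof. by rewrite /omega innerNr. Qed.
Lemma omegaBr u v w : omega w (u - v) = omega w u - omega w v.
Proof. by rewrite omegaDr omegaNr. Qed.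


Lemma norm_entry u j : `|u 0 j| <= `|u|.
Proof. rewrite (_ : `|u| = mx_norm u) // mx_normrE; exact: (le_bigmax _ (fun ij : 'I_1 * 'I_(d+d) => `|u ij.1 ij.2|) (0, j)). Qed.

Lemma norm_lt u (e : R) : 0 < e -> (forall j, `|u 0 j| < e) -> `|u| < e.
Proof.
move=> e0 H; rewrite (_ : `|u| = mx_norm u) // mx_normrE; apply: bigmax_lt => // [[i j]] _ /=.
by rewrite (ord1 i).
Qed.

Lemma inner_le_norm u : inner u u <= (d + d)%:R * `|u| ^+ 2.
Proof.
rewrite innerE.
apply: (@le_trans _ _ (\sum_(j < d + d) `|u| ^+ 2)); last first.
  by rewrite sumr_const card_ord mulr_natl.
apply: ler_sum => j _; rewrite -expr2 -real_normK ?num_real //.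
by rewrite lerXn2r ?nnegrE ?norm_entry.
Qed.

Lemma entry_le_inner u j : u 0 j ^+ 2 <= inner u u.
Proof.
rewrite innerE (bigD1 j) //= -expr2 lerDl; apply: sumr_ge0 => i _.
by rewrite -expr2 sqr_ge0.
Qed.

Lemma inner_small u (e : R) : 0 < e -> inner u u < e ^+ 2 -> `|u| < e.
Proof.
move=> e0 H; apply: norm_lt => // j.
have := le_lt_trans (entry_le_inner u j) H.
rewrite -real_normK ?num_real // => h; have := normr_ge0 (u 0 j); nra.
Qed.

Lemma inner_abs u v : `|inner u v| <= (inner u u + inner v v) / 2.
Proof.
have h1 := inner_ge0 (u - v); have h2 := inner_ge0 (u + v).
rewrite !(innerBl, innerBr, innerDl, innerDr) in h1 h2.
rewrite (innerC v u) in h1 h2.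
rewrite ler_norml; apply/andP; split; lra.
Qed.

Lemma omega_abs u v : `|omega u v| <= (inner u u + inner v v) / 2.
Proof. by rewrite /omega -(inner_J u u); apply: inner_abs. Qed.

End Alg.

Unset Implicit Arguments.
Section Anal.
Variables (R : realType) (d : nat) (F : vec R d -> R).
Hypothesis hs : smooth F.
Hypothesis hp : forall x, posdef (hessian F x).

Lemma dirD (G : vec R d -> R) x v : differentiable G x ->
  'D_v G x = \sum_i v 0 i * 'D_(ebase R i) G x.
Proof.
move=> dG; rewrite deriveE // {1}(row_sum_delta v) linear_sum.
by apply: eq_bigr => i _; rewrite linearZ /= -deriveE.
Qed.

Lemma F_diff x : differentiable F x.
Proof. by have [h _] := hs 1%N; apply: h. Qed.

Lemma DF_diff v x : differentiable (fun y => 'D_v F y) x.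
Proof. by have [_ h] := hs 2%N; have [h' _] := h v; apply: h'. Qed.

Lemma F_cont : continuous F.
Proof. exact: (hs 0%N). Qed.

Lemma hess_quad v x : 'D_v (fun y => 'D_v F y) x = (v *m hessian F x *m v^T) 0 0.
Proof.
have E : (fun y => 'D_v F y) = \sum_(j < d + d) (fun y => v 0 j * 'D_(ebase R j) F y).
  by rewrite fct_sumE; apply/funext => y; rewrite dirD //; apply: F_diff.
rewrite dirD; last exact: DF_diff.
rewrite E !mxE.
under [RHS]eq_bigr => i _ do rewrite !mxE mulr_suml.
rewrite exchange_big /=; apply: eq_bigr => i _.
rewrite derive_sum; last first.
  move=> j; apply: (@derivableZ _ _ _ (fun y => 'D_(ebase R j) F y)).
  by apply: diff_derivable; apply: DF_diff.
rewrite mulr_sumr; apply: eq_bigr => j _; rewrite !mxE.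
rewrite (@deriveZ _ _ _ (fun y => 'D_(ebase R j) F y)); last first.
  by apply: diff_derivable; apply: DF_diff.
rewrite [_ *: _]mulrC; ring.
Qed.

Lemma quad_ge0 v x : 0 <= 'D_v (fun y => 'D_v F y) x.
Proof.
rewrite hess_quad; have [->|v0] := eqVneq v 0.
  by rewrite !mul0mx mxE.
exact/ltW/hp.
Qed.

Lemma line_derivable (G : vec R d -> R) p u t :
  derivable G (t *: u + p) u -> derivable (fun s : R => G (s *: u + p)) t 1.
Proof.
rewrite /derivable.
suff -> : (fun h : R => h^-1 *: (((fun s : R => G (s *: u + p)) \o shift t) (h *: 1)
     - G (t *: u + p))) =
   (fun h => h^-1 *: ((G \o shift (t *: u + p)) (h *: u) - G (t *: u + p))) by [].
apply/funext => h /=; congr (_ *: (G _ - _)).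
by rewrite /shift /= [h *: 1]mulr1 scalerDl addrA.
Qed.

Lemma line_derive (G : vec R d -> R) p u t :
  'D_1 (fun s : R => G (s *: u + p)) t = 'D_u G (t *: u + p).
Proof.
rewrite /derive.
suff -> : (fun h : R => h^-1 *: (((fun s : R => G (s *: u + p)) \o shift t) (h *: 1)
     - G (t *: u + p))) =
   (fun h => h^-1 *: ((G \o shift (t *: u + p)) (h *: u) - G (t *: u + p))) by [].
apply/funext => h /=; congr (_ *: (G _ - _)).
by rewrite /shift /= [h *: 1]mulr1 scalerDl addrA.
Qed.

Lemma convex_ineq p q : F p + 'D_(q - p) F p <= F q.
Proof.
set u := q - p.
pose g := fun s : R => F (s *: u + p).
pose phi := fun s : R => 'D_u F (s *: u + p).
have dg : forall s, derivable g s 1.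
  by move=> s; apply: line_derivable; apply: diff_derivable; apply: F_diff.
have Dg : forall s, 'D_1 g s = phi s by move=> s; apply: line_derive.
have dphi : forall s, derivable phi s 1.
  by move=> s; apply: (@line_derivable (fun y => 'D_u F y)); apply: diff_derivable; apply: DF_diff.
have Dphi : forall s, 0 <= 'D_1 phi s.
  by move=> s; rewrite (@line_derive (fun y => 'D_u F y)); apply: quad_ge0.
have phimono : forall x y, 0 <= x -> x <= y -> y <= 1 -> phi x <= phi y.
  apply: ger0_derive1_ndecr => [x _|x _|]; first exact: dphi.
    by rewrite derive1E.
  by apply: derivable_within_continuous => x _; apply: dphi.
have [c0 Hin Hc] : exists2 c, c \in `]0, 1[%R & g 1 - g 0 = phi c * (1 - 0).
  apply: (@MVT _ g phi) => //.
  by apply: derivable_within_continuous => x _; apply: dg.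
move: Hin; rewrite in_itv /= => /andP[c0l c0r].
have : phi 0 <= phi c0 by apply: phimono; rewrite ?lexx ?ltW.
rewrite subr0 mulr1 in Hc.
have -> : F q = g 1 by rewrite /g scale1r /u subrK.
have -> : F p = g 0 by rewrite /g scale0r add0r.
have -> : 'D_(q - p) F p = phi 0 by rewrite /phi scale0r add0r.
lra.
Qed.

Variable c : R.
Hypothesis F0c : F 0 < c.

Lemma step_ineq x y : billiard_step F c x y ->
  F (2^-1 *: (x + y)) = c /\
  forall w, F w = c -> omega (x - 2^-1 *: (x + y)) (w - 2^-1 *: (x + y)) <= 0.
Proof.
case=> _ [m [r [lam [Fm [[Htan Hom] [lam0 [Hmx Hy]]]]]]].
have -> : 2^-1 *: (x + y) = m.
  rewrite Hy addrC subrK scalerA mulVf ?scale1r //.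
split => // w Fw.
have dL : forall v, 'D_v F m = 'd F m v by move=> v; rewrite deriveE //; apply: F_diff.
have Lm : 0 < 'd F m m.
  have := convex_ineq m 0; rewrite dL sub0r linearN /=.
  move: Fm; rewrite /levelset /= => ->; move=> h; have := le_lt_trans h F0c; lra.
have reeb : forall v, omega v r = 'd F m v / 'd F m m.
  move=> v; set t := 'd F m v / 'd F m m.
  have : tangent F m (v - t *: m).
    rewrite /tangent /= dL linearB linearZ /= /t [_ *: _]mulrC mulrCA mulfV ?mulr1 ?subrr // gt_eqF //.
  move/Htan; rewrite omegaBl omegaZl Hom mulr1; lra.
have -> : x - m = - (lam *: r) by rewrite -Hmx opprB.
rewrite omegaNl omegaZl omega_anti mulrN opprK reeb.
have : 'd F m (w - m) <= 0.
  have := convex_ineq m w; rewrite dL Fw; move: Fm; rewrite /levelset /= => ->; lra.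
move=> h; rewrite mulrA; apply: mulr_le0_ge0; last by rewrite invr_ge0 ltW.
by apply: mulr_ge0_le0 => //; rewrite ltW.
Qed.

Hypothesis hc : compact (levelset F c).

Lemma boundD : exists D : R, 0 < D /\ forall w, F w = c -> `|w| <= D.
Proof.
have [M [_ HM]] := compact_bounded hc.
exists (`|M| + 1); split; first by rewrite ltr_wpDl.
move=> w Fw; apply: (HM (`|M| + 1)) => //.
by rewrite (le_lt_trans (ler_norm M)) // ltrDl.
Qed.

Lemma boundr : exists r : R, 0 < r /\ forall w, F w = c -> r ^+ 2 <= inner w w.
Proof.
have := @cvgr_lt _ _ _ _ F (F 0) (F_cont 0) c F0c.
move=> H; have [e /= e0 He] := proj1 (@nbhs_norm0P _ _ (fun t => F t < c)) (H _).
exists e; split => // w Fw; rewrite leNgt; apply/negP => /(@inner_small R d w e e0) /He.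
by rewrite Fw ltxx.
Qed.

Lemma cont_line p v : continuous (fun t : R => F (p + t *: v)).
Proof.
move=> t; apply: (continuous_comp (f := fun t : R => p + t *: v)); last exact: F_cont.
have -> : (fun t : R => p + t *: v) = (fun=> p) + (fun t : R => t *: v) by [].
apply: continuousD; first exact: cvg_cst.
by apply: continuousZr_tmp; exact: cvg_id.
Qed.

Lemma ray_hit B z a : (forall w, F w = c -> inner w w <= B) -> c < F z ->
  inner a a = inner z z -> inner z a = 0 -> 2 * B < inner z z ->
  exists s, 0 < s /\ F (s *: a) = c.
Proof.
move=> hB Fz haa hza hN.
have Fa : c < F a.
  rewrite ltNge; apply/negP => Fa.
  have [t ht Ht] : exists2 t, t \in `[0, 1] & F (z + t *: (a - z)) = c.
    apply: IVT; first exact: ler01.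
      by apply: continuous_subspaceT; apply: cont_line.
    rewrite scale0r addr0 scale1r addrC subrK.
    by apply/andP; split; [rewrite ge_min Fa orbT | rewrite le_max (ltW Fz)].
  have := hB _ Ht.
  rewrite !(innerDl, innerDr, innerZl, innerZr, innerBl, innerBr, innerNl, innerNr) (@innerC _ _ a z) hza haa ?opprK.
  have := mulr_ge0 (@inner_ge0 _ _ z) (sqr_ge0 (2 * t - 1)); move: hN; set N := inner z z; nra.
have [t ht Ht] : exists2 t, t \in `[0, 1] & F (0 + t *: a) = c.
  apply: IVT; first exact: ler01.
    by apply: continuous_subspaceT; apply: cont_line.
  rewrite scale0r addr0 scale1r add0r.
  by apply/andP; split; [rewrite ge_min (ltW F0c) | rewrite le_max (ltW Fa) orbT].
exists t; split; last by rewrite add0r in Ht.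
move: ht; rewrite in_itv /= => /andP[t0 _]; rewrite lt_neqAle t0 andbT.
apply/negP => /eqP t0'; move: Ht; rewrite -t0' scale0r addr0 => h.
by move: F0c; rewrite h ltxx.
Qed.

Lemma omega_zJz (z : vec R d) : omega z (Jc z) = inner z z.
Proof. by rewrite /omega inner_J. Qed.

Lemma sq_le (a b : R) : 0 <= a -> a <= b -> a ^+ 2 <= b ^+ 2.
Proof. by move=> a0 ab; rewrite lerXn2r // ?nnegrE // (le_trans a0). Qed.

Lemma main k : (1 <= k)%N -> exists rho : R, 0 < rho /\
    forall z : vec R d, exterior F c z -> billiard_iter F c k z z -> enorm z <= rho.
Proof.
move=> k1.
have [D [D0 HD]] := boundD.
have [r [r0 Hr]] := boundr.
set n : R := (d + d)%:R.
have n0 : 0 <= n by rewrite /n ler0n.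
set B := n * D ^+ 2.
have hB : forall w, F w = c -> inner w w <= B.
  move=> w Fw; apply: le_trans (inner_le_norm w) _.
  by apply: ler_wpM2l => //; apply: sq_le => //; apply: HD.
set E := n * ((2 * k%:R + 1) * D) ^+ 2 + n * (2 * D) ^+ 2.
have E0 : 0 <= E by rewrite /E addr_ge0 // mulr_ge0 // sqr_ge0.
have B0 : 0 <= B by rewrite /B mulr_ge0 // sqr_ge0.
set T := 2 * B + E ^+ 2 / r ^+ 2.
have T0 : 0 <= T.
  by rewrite /T addr_ge0 // mulr_ge0 // ?sqr_ge0 // invr_ge0 sqr_ge0.
exists (Num.sqrt T + 1); split; first by rewrite ltr_wpDl ?sqrtr_ge0.
move=> z Fz [zs [z0 [zk hstep]]].
suff hN : inner z z <= T.
  rewrite /enorm; apply: le_trans (ler_wsqrtr hN) _; rewrite lerDl //.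
rewrite leNgt; apply/negP => hN.
have Fz' : c < F z by [].
have h2B : 2 * B < inner z z.
  apply: le_lt_trans hN; rewrite /T lerDl mulr_ge0 ?sqr_ge0 ?invr_ge0 ?sqr_ge0 //.
have hEr : E ^+ 2 < inner z z * r ^+ 2.
  rewrite -ltr_pdivrMr ?exprn_gt0 //; apply: le_lt_trans hN.
  by rewrite /T lerDr mulr_ge0.
pose m i := 2^-1 *: (zs i + zs i.+1).
have hm : forall i, (i < k)%N -> F (m i) = c /\
    forall w, F w = c -> omega (zs i - m i) (w - m i) <= 0.
  by move=> i hi; apply: step_ineq; apply: hstep.
pose sg i : R := (-1) ^+ i.
have sg2 : forall i, sg i * sg i = 1.
  by move=> i; rewrite /sg -exprMn mulrNN mulr1 expr1n.
have sgS : forall i, sg i.+1 = - sg i by move=> i; rewrite /sg exprS mulN1r.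
have zsS : forall i, zs i.+1 = 2 *: m i - zs i.
  move=> i; rewrite /m scalerA mulfV; last by rewrite pnatr_eq0.
  by rewrite scale1r [zs i + _]addrC addrK.
pose e i := zs i - sg i *: z.
have he : forall i, (i <= k)%N -> `|e i| <= 2 * i%:R * D.
  elim => [_|i IH hi].
    by rewrite /e z0 /sg expr0 scale1r subrr normr0 mulr0 mul0r.
  have hi' : (i < k)%N by [].
  have -> : e i.+1 = 2 *: m i - e i.
    by rewrite /e zsS sgS scaleNr opprK opprD opprK addrA.
  apply: le_trans (ler_normB _ _) _.
  rewrite normrZ ger0_norm // -natr1.
  have h1 := IH (ltnW hi').
  have h2 : `|m i| <= D by apply: HD; case: (hm i hi').
  move: h1 h2; set M := `|m i|; set Ee := `|e i|; set I := i%:R.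
  move=> h1 h2; have -> : (i.+1%:R : R) = I + 1 by rewrite /I -natr1.
  nra.
have key : forall i, (i < k)%N -> 0 < sg i * omega z (m i).
  move=> i hi; have [Fm Hw] := hm i hi.
  pose a := sg i *: Jc z.
  have haa : inner a a = inner z z.
    by rewrite /a innerZl innerZr inner_J mulrA sg2 mul1r.
  have hza : inner z a = 0.
    by rewrite /a innerZr innerC -/(omega z z) omega_self mulr0.
  have [s [s0 Fs]] := ray_hit _ _ _ hB Fz' haa hza h2B.
  have hwr := Hr _ Fs.
  rewrite innerZl innerZr haa mulrA -expr2 in hwr.
  have Hw' := Hw _ Fs.
  have hz : zs i - m i = sg i *: z + (e i - m i) by rewrite /e addrA [sg i *: z + _]addrC subrK.
  rewrite hz omegaDl omegaZl in Hw'.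
  have hzw : omega z (s *: a - m i) = s * (sg i * inner z z) - omega z (m i).
    by rewrite omegaBr omegaZr /a omegaZr omega_zJz.
  rewrite hzw in Hw'.
  have herr := omega_abs (e i - m i) (s *: a - m i).
  have hem : `|e i - m i| <= (2 * k%:R + 1) * D.
    apply: le_trans (ler_normB _ _) _; rewrite mulrDl mul1r.
    apply: lerD; last exact: HD.
    apply: le_trans (he i (ltnW hi)) _; apply: ler_wpM2r; first exact: ltW.
    by apply: ler_wpM2l => //; rewrite ler_nat ltnW.
  have hwm : `|s *: a - m i| <= 2 * D.
    apply: le_trans (ler_normB _ _) _; rewrite mulr2n mulrDl mul1r.
    by apply: lerD; apply: HD.
  have i1 := le_trans (inner_le_norm (e i - m i)) (ler_wpM2l n0 (sq_le _ _ (normr_ge0 _) hem)).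
  have i2 := le_trans (inner_le_norm (s *: a - m i)) (ler_wpM2l n0 (sq_le _ _ (normr_ge0 _) hwm)).
  have hsN : E < s * inner z z.
    rewrite ltNge; apply/negP => hle.
    have N0 := @inner_ge0 _ _ z.
    have sN0 : 0 <= s * inner z z by rewrite mulr_ge0 // ltW.
    have h1 : (s * inner z z) ^+ 2 <= E ^+ 2 by apply: sq_le.
    have h2 : r ^+ 2 * inner z z <= s ^+ 2 * inner z z * inner z z by apply: ler_wpM2r.
    have e1 : (s * inner z z) ^+ 2 = s ^+ 2 * inner z z * inner z z.
      by rewrite exprMn [X in _ * X]expr2 mulrA.
    have e2 : E ^+ 2 < r ^+ 2 * inner z z by rewrite mulrC.
    rewrite e1 in h1; move: h1 h2 e2; set P := s ^+ 2 * inner z z * inner z z.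
    set Q := r ^+ 2 * inner z z; set U := E ^+ 2; lra.
  move: herr; rewrite ler_norml => /andP[herr _].
  set N := inner z z in hsN Hw' *.
  set X := sg i * omega z (m i).
  have eqX : sg i * (s * (sg i * N) - omega z (m i)) = s * N - X.
    by rewrite mulrBr mulrCA (mulrA (sg i)) sg2 mul1r.
  rewrite eqX in Hw'.
  move: Hw' herr i1 i2 hsN E0; rewrite /E.
  set O := omega _ _; set I1 := inner _ _; set I2 := inner _ _.
  set SN := s * N; set K1 := ((2 * k%:R + 1) * D) ^+ 2; set K2 := (2 * D) ^+ 2.
  move=> *; lra.
pose A i := sg i * omega z (zs i).
have tel : forall i, A i.+1 = A i - 2 * (sg i * omega z (m i)).
  move=> i; rewrite /A /m sgS omegaZr omegaDr.
  set u := omega z (zs i); set v := omega z (zs i.+1).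
  have h2 : (2 : R) * 2^-1 = 1 by rewrite mulfV // pnatr_eq0.
  have -> : 2 * (sg i * (2^-1 * (u + v))) = (2 * 2^-1) * (sg i * (u + v)) by ring.
  rewrite h2; ring.
have dec : forall j, (0 < j)%N -> (j <= k)%N -> A j < A 0.
  elim => [//|j IH _ hj].
  rewrite tel; have := key j hj.
  case: j IH hj => [_ _|j IH hj] h.
    by rewrite ltrBlDr ltrDl mulr_gt0.
  have := IH isT (ltnW hj); lra.
have := dec k k1 (leqnn k).
by rewrite /A zk z0 omega_self !mulr0 ltxx.
Qed.

End Anal.

Unset Implicit Arguments.

Theorem theorem3p8 (R : realType) (d : nat) (F : 'rV[R]_(d + d) -> R) (c : R) :
  smooth F ->
  (forall x, posdef (hessian F x)) ->
  F 0 < c ->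
  compact (levelset F c) ->
  forall k : nat, (1 <= k)%N ->
  exists rho : R, 0 < rho /\
    forall z : 'rV[R]_(d + d),
      exterior F c z -> billiard_iter F c k z z -> enorm z <= rho.
Proof.
move=> hs hp F0c hc k k1.
exact: (@main R d F hs hp c F0c hc k k1).
Qed.
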